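(* Let $M,N$ be weights of $\mathbb{R}^m,\mathbb{R}^n$, let $A\in\mathbb{R}^{m\times n}$ with $MA=AN$, and let $K\subseteq\mathbb{R}^n$ be a closed cone. Then $$(A^{[\dagger]})^{[*]}\circ I\circ K^{[*]}\subseteq A\circ I\circ K+\mathcal{N}\big((A\circ I)^{[*]}\big)\iff (A^{[*]}\circ A)^{[\dagger]}\circ K^{[*]}\subseteq K+\mathcal{N}(A\circ I).$$
   Context: A weight is a real symmetric matrix $W$ with $W^2=I$. $\mathbb{R}^m$ and $\mathbb{R}^n$ carry weights $M\in\mathbb{R}^{m\times m}$ and $N\in\mathbb{R}^{n\times n}$, respectively. The indefinite inner product on the space with weight $W$ is $[x,y]=\langle x,Wy\rangle$. Indefinite matrix product: if $B$ has $p$ columns and $C$ has $p$ rows (or is a vector in $\mathbb{R}^p$), $p\in\{m,n\}$, and $W$ is the weight of $\mathbb{R}^p$, then $B\circ C:=BWC$. $I$ denotes an identity matrix of the appropriate size; e.g. $A^{[*]}\circ A=A^{[*]}MA$. Indefinite adjoint of $B\in\mathbb{R}^{p\times q}$: $B^{[*]}:=W_qB^TW_p$, where $W_p,W_q$ are the weights of $\mathbb{R}^p,\mathbb{R}^q$. Indefinite Moore–Penrose inverse: for $B\in\mathbb{R}^{p\times q}$, $B^{[\dagger]}$ is the unique $X\in\mathbb{R}^{q\times p}$ such that - $B\circ X\circ B=B$, - $X\circ B\circ X=X$, - $(B\circ X)^{[*]}=B\circ X$, - $(X\circ B)^{[*]}=X\circ B$. It equals $W_qB^\dagger W_p$. Range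 and null space: for a matrix $B$ with $q$ columns, $\mathcal{R}(B)=\{B\circ x:x\in\mathbb{R}^q\}$ and $\mathcal{N}(B)=\{x\in\mathbb{R}^q:B\circ x=0\}$. A cone is a nonempty set closed under addition and under multiplication by nonnegative scalars. For $S$ a subset of $\mathbb{R}^p$ with weight $W$, the dual is $S^{[*]}=\{x\in\mathbb{R}^p:[x,t]\ge0\ \forall t\in S\}$. For a matrix $B$ and a set $S$, $B\circ S=\{B\circ s:s\in S\}$. The sum of sets is the Minkowski sum. *)

(* Defs.v *)
From HB Require Import structures.
From Stdlib Require Import Reals ClassicalEpsilon FunctionalExtensionality.
From mathcomp Require Import all_boot all_order all_algebra.

Set Implicit Arguments.
Unset Strict Implicit.
Unset Printing Implicit Defensive.

Definition Req_bool (x y : R) : bool := if Req_EM_T x y then true else false.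

Lemma Req_boolP : Equality.axiom Req_bool.
Proof. by move=> x y; rewrite /Req_bool; case: Req_EM_T => h; constructor. Qed.

HB.instance Definition _ := hasDecEq.Build R Req_boolP.

Definition R_find (P : pred R) (n : nat) : option R :=
  match excluded_middle_informative (exists x, P x) with
  | left h => Some (proj1_sig (constructive_indefinite_description _ h))
  | right _ => None
  end.

Lemma R_find_correct P n x : R_find P n = Some x -> P x.
Proof.
rewrite /R_find; case: excluded_middle_informative => // h [<-].
exact: (proj2_sig (constructive_indefinite_description _ h)).
Qed.

Lemma R_find_complete (P : pred R) : (exists x, P x) -> exists n, R_find P n.
Proof. by move=> h; exists 0%N; rewrite /R_find; case: excluded_middle_informative. Qed.

Lemma R_find_ext (P Q : pred R) : P =1 Q -> R_find P =1 R_find Q.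
Proof. by move=> /functional_extensionality ->. Qed.

HB.instance Definition _ := hasChoice.Build R R_find_correct R_find_complete R_find_ext.

Lemma R_addA : associative Rplus. Proof. by move=> x y z; rewrite Rplus_assoc. Qed.
Lemma R_addC : commutative Rplus. Proof. exact: Rplus_comm. Qed.
Lemma R_add0 : left_id R0 Rplus. Proof. exact: Rplus_0_l. Qed.
Lemma R_addN : left_inverse R0 Ropp Rplus. Proof. exact: Rplus_opp_l. Qed.

HB.instance Definition _ := GRing.isZmodule.Build R R_addA R_addC R_add0 R_addN.

Lemma R_mulA : associative Rmult. Proof. by move=> x y z; rewrite Rmult_assoc. Qed.
Lemma R_mulC : commutative Rmult. Proof. exact: Rmult_comm. Qed.
Lemma R_mul1 : left_id R1 Rmult. Proof. exact: Rmult_1_l. Qed.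
Lemma R_mulDl : left_distributive Rmult Rplus.
Proof. by move=> x y z; rewrite Rmult_plus_distr_r. Qed.
Lemma R_one_neq0 : R1 != R0.
Proof. by apply/negP => /eqP; apply: R1_neq_R0. Qed.

HB.instance Definition _ :=
  GRing.Zmodule_isComNzRing.Build R R_mulA R_mulC R_mul1 R_mulDl R_one_neq0.

Import GRing.Theory.
Local Open Scope ring_scope.

Definition is_weight (p : nat) (W : 'M[R]_p) : Prop :=
  W^T = W /\ W *m W = 1%:M.

(* Indefinite matrix product B o C := B W C, W the weight of R^p
   (p = number of columns of B = number of rows of C). *)
Definition iprod (k p q : nat) (W : 'M[R]_p) (B : 'M[R]_(k, p)) (C : 'M[R]_(p, q))
  : 'M[R]_(k, q) := B *m W *m C.

Definition iadj (p q : nat) (Wp : 'M[R]_p) (Wq : 'M[R]_q) (B : 'M[R]_(p, q))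
  : 'M[R]_(q, p) := Wq *m B^T *m Wp.

Definition is_imp_inverse (p q : nat) (Wp : 'M[R]_p) (Wq : 'M[R]_q)
  (B : 'M[R]_(p, q)) (X : 'M[R]_(q, p)) : Prop :=
  [/\ iprod Wp (iprod Wq B X) B = B,
      iprod Wq (iprod Wp X B) X = X,
      iadj Wp Wp (iprod Wq B X) = iprod Wq B X
    & iadj Wq Wq (iprod Wp X B) = iprod Wp X B].

Definition imp_inv (p q : nat) (Wp : 'M[R]_p) (Wq : 'M[R]_q) (B : 'M[R]_(p, q))
  : 'M[R]_(q, p) :=
  epsilon (inhabits 0) (is_imp_inverse Wp Wq B).

Definition vset (p : nat) := 'cV[R]_p -> Prop.

Definition subset_v (p : nat) (S T : vset p) : Prop := forall x, S x -> T x.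

Definition msum (p : nat) (S T : vset p) : vset p :=
  fun x => exists a b, S a /\ T b /\ x = a + b.

Definition iimage (k q : nat) (W : 'M[R]_q) (B : 'M[R]_(k, q)) (S : vset q) : vset k :=
  fun y => exists s, S s /\ y = iprod W B s.

Definition inull (k q : nat) (W : 'M[R]_q) (B : 'M[R]_(k, q)) : vset q :=
  fun x => iprod W B x = 0.

Definition iinner (p : nat) (W : 'M[R]_p) (x y : 'cV[R]_p) : R :=
  (x^T *m W *m y) 0 0.

Definition idual (p : nat) (W : 'M[R]_p) (S : vset p) : vset p :=
  fun x => forall t, S t -> Rle 0%R (iinner W x t).

Definition is_cone (p : nat) (K : vset p) : Prop :=
  (exists x, K x) /\
  (forall x y, K x -> K y -> K (x + y)) /\
  (forall (a : R) x, Rle 0%R a -> K x -> K (a *: x)).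

(* Topologically closed subset of R^p (any norm; here the sup norm). *)
Definition is_closed_set (p : nat) (K : vset p) : Prop :=
  forall x : 'cV[R]_p,
    (forall eps : R, Rlt 0%R eps ->
       exists y, K y /\ forall i : 'I_p, Rlt (Rabs (x i 0 - y i 0)) eps) ->
    K x.

(* Main.v *)
Require Import Defs.
From HB Require Import structures.
From Stdlib Require Import Reals Lra ClassicalEpsilon.
From mathcomp Require Import all_boot all_order all_algebra.
Import GRing.Theory.
Local Open Scope ring_scope.

Lemma R_mulVf (x : R) : x != 0 -> Rinv x * x = 1.
Proof. move=> /eqP h; exact: Rinv_l. Qed.
Lemma R_inv0 : Rinv 0 = 0. Proof. exact: Rinv_0. Qed.
HB.instance Definition _ := GRing.ComNzRing_isField.Build R R_mulVf R_inv0.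

Lemma Rz0 : (0 : R) = R0. Proof. by []. Qed.

Lemma sumsq0 k (f : 'I_k -> R) :
  Rle 0 (\sum_(j < k) f j * f j) /\
  (\sum_(j < k) f j * f j = 0 -> forall j, f j = 0).
Proof.
elim: k f => [|k IH] f.
  by rewrite big_ord0; split; [apply: Rle_refl | move=> _ []].
rewrite big_ord_recr /=.
have [IH1 IH2] := IH (fun j => f (widen_ord (leqnSn k) j)).
set S := \sum_(j < k) _ in IH1 IH2 *.
have hsq : Rle 0 (f ord_max * f ord_max) by apply: Rle_0_sqr.
change (S + f ord_max * f ord_max) with (Rplus S (f ord_max * f ord_max)).
split; first lra.
move=> h0.
have h0' : Rplus S (Rmult (f ord_max) (f ord_max)) = R0 := h0.
have IH1' : Rle R0 S := IH1.
have hS : S = R0.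
  lra.
have hm : Rmult (f ord_max) (f ord_max) = R0.
  lra.
move=> j; have [jk|kj] := ltnP j k.
  have := IH2 hS (Ordinal jk).
  by have -> : widen_ord (leqnSn k) (Ordinal jk) = j by apply/val_inj.
have -> : j = ord_max.
  apply/val_inj => /=; apply/eqP; rewrite eqn_leq kj andbT; exact: (ltn_ord j).
by case: (Rmult_integral _ _ hm).
Qed.

Lemma rv_sq0 p (w : 'rV[R]_p) : w *m w^T = 0 -> w = 0.
Proof.
move=> h; have := congr1 (fun X : 'M[R]_1 => X 0 0) h; rewrite !mxE => hs.
have [_ H] := @sumsq0 p (fun j => w 0 j).
apply/rowP => j; rewrite mxE; apply: H.
apply: (etrans _ hs); apply: eq_bigr => i _; by rewrite mxE.
Qed.

Lemma gram_unit p r (F : 'M[R]_(p, r)) : row_free F^T -> F^T *m F \in unitmx.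
Proof.
move=> hF; rewrite -row_free_unit -kermx_eq0; apply/eqP/row_matrixP => i.
rewrite row0.
have hk : row i (kermx (F^T *m F)) *m (F^T *m F) = 0.
  by rewrite -row_mul mulmx_ker row0.
set u := row i _ in hk *.
have hw : (u *m F^T) *m (u *m F^T)^T = 0.
  by rewrite trmx_mul trmxK !mulmxA -(mulmxA u) hk mul0mx.
have := @rv_sq0 _ _ hw => /eqP; rewrite mulmx_free_eq0 //. by move/eqP.
Qed.

Definition mp p q (B : 'M[R]_(p,q)) (X : 'M[R]_(q,p)) : Prop :=
 [/\ B *m X *m B = B, X *m B *m X = X, (B *m X)^T = B *m X & (X *m B)^T = X *m B].
Arguments mp {p q}.

Lemma mp_uniq p q (B : 'M[R]_(p,q)) (X Y : 'M[R]_(q,p)) : mp B X -> mp B Y -> X = Y.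
Proof.
move=> [X1 X2 X3 X4] [Y1 Y2 Y3 Y4].
have hXB : X *m B = Y *m B.
  have e1 : X *m B = (X *m B) *m (Y *m B) by rewrite -{1}Y1 !mulmxA.
  have e2 : (Y *m B) *m (X *m B) = Y *m B by rewrite -!mulmxA (mulmxA B X B) X1.
  by rewrite e1 -X4 -Y4 -trmx_mul e2 Y4.
have hBX : B *m X = B *m Y.
  have e1 : B *m X = (B *m Y) *m (B *m X) by rewrite -{1}Y1 -!mulmxA.
  have e2 : (B *m X) *m (B *m Y) = B *m Y by rewrite !mulmxA X1.
  by rewrite e1 -X3 -Y3 -trmx_mul e2 Y3.
have e : X = X *m (B *m X) by rewrite mulmxA X2.
by rewrite e hBX mulmxA hXB Y2.
Qed.

Lemma mp_fact p q r (F : 'M[R]_(p,r)) (G : 'M[R]_(r,q)) :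
  row_free F^T -> row_free G -> exists X, mp (F *m G) X.
Proof.
move=> hF hG.
have hGG : G *m G^T \in unitmx.
  by rewrite -{1}(trmxK G); apply: gram_unit; rewrite trmxK.
have hFF : F^T *m F \in unitmx by apply: gram_unit.
set iG := invmx (G *m G^T); set iF := invmx (F^T *m F).
have siG : iG^T = iG by rewrite /iG trmx_inv trmx_mul trmxK.
have siF : iF^T = iF by rewrite /iF trmx_inv trmx_mul trmxK.
exists (G^T *m iG *m iF *m F^T).
have hBX : F *m G *m (G^T *m iG *m iF *m F^T) = F *m iF *m F^T.
  by rewrite !mulmxA -(mulmxA F G G^T) (mulmxK hGG).
have hXB : (G^T *m iG *m iF *m F^T) *m (F *m G) = G^T *m iG *m G.
  by rewrite !mulmxA -(mulmxA _ F^T F) (mulmxKV hFF).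
split.
- by rewrite hBX !mulmxA -(mulmxA _ F^T F) (mulmxKV hFF).
- rewrite hXB !mulmxA -(mulmxA _ G G^T) (mulmxKV hGG) //.
- by rewrite hBX !trmx_mul trmxK siF mulmxA.
- by rewrite hXB !trmx_mul trmxK siG mulmxA.
Qed.

Lemma mp_exists p q (B : 'M[R]_(p,q)) : exists X, mp B X.
Proof.
rewrite -(mulmx_base B); apply: mp_fact; last exact: row_base_free.
by rewrite /row_free mxrank_tr; exact: col_base_full.
Qed.

Section W.
Variables (p q : nat) (Wp : 'M[R]_p) (Wq : 'M[R]_q).
Hypotheses (hp : is_weight Wp) (hq : is_weight Wq).

Lemma mulWW k (X : 'M[R]_(k, p)) : X *m Wp *m Wp = X.
Proof. by case: hp => _ h; rewrite -mulmxA h mulmx1. Qed.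
Lemma mulWWq k (X : 'M[R]_(k, q)) : X *m Wq *m Wq = X.
Proof. by case: hq => _ h; rewrite -mulmxA h mulmx1. Qed.

Lemma cand_ok (B : 'M[R]_(p,q)) P : mp B P -> is_imp_inverse Wp Wq B (Wq *m P *m Wp).
Proof.
case: hp => hpT hpW; case: hq => hqT hqW.
move=> [P1 P2 P3 P4]; rewrite /is_imp_inverse /iprod /iadj; split.
- by rewrite !mulmxA mulWWq mulWW P1.
- rewrite !mulmxA mulWW mulWWq.
  by rewrite -(mulmxA Wq P B) -(mulmxA Wq (P *m B) P) P2.
- rewrite !mulmxA mulWWq trmx_mul P3 hpT !mulmxA hpW mul1mx //.
- rewrite !mulWW -(mulmxA Wq P B) trmx_mul P4 hqT !mulmxA mulWWq //.
Qed.

Lemma spec_mp (B : 'M[R]_(p,q)) X : is_imp_inverse Wp Wq B X -> mp B (Wq *m X *m Wp).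
Proof.
case: hp => hpT hpW; case: hq => hqT hqW.
rewrite /is_imp_inverse /iprod /iadj; move=> [h1 h2 h3 h4]; split.
- by rewrite !mulmxA.
- by rewrite -[in RHS]h2 !mulmxA.
- by rewrite !mulmxA trmx_mul hpT -[in RHS]h3 mulWW.
- rewrite -(mulmxA Wq X Wp) -(mulmxA Wq (X *m Wp) B) trmx_mul hqT.
  by rewrite -[in RHS]h4 !mulmxA hqW mul1mx.
Qed.

Lemma imp_invE (B : 'M[R]_(p,q)) P : mp B P -> imp_inv Wp Wq B = Wq *m P *m Wp.
Proof.
move=> hP.
have spec : is_imp_inverse Wp Wq B (imp_inv Wp Wq B).
  rewrite /imp_inv; apply: epsilon_spec; exists (Wq *m P *m Wp); exact: cand_ok.
have e := @mp_uniq _ _ _ _ _ (@spec_mp B _ spec) hP.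
by rewrite -e !mulmxA (proj2 hq) mul1mx mulWW.
Qed.
End W.

Lemma orth_mp p q (U : 'M[R]_p) (V : 'M[R]_q) (B : 'M[R]_(p,q)) P :
  is_weight U -> is_weight V -> mp B P -> mp (U *m B *m V) (V *m P *m U).
Proof.
move=> hU hV [P1 P2 P3 P4]; have [hUT hUU] := hU; have [hVT hVV] := hV.
split.
- rewrite !mulmxA (@mulWW _ _ hV) (@mulWW _ _ hU).
  by rewrite -(mulmxA U B P) -(mulmxA U (B *m P) B) P1.
- rewrite !mulmxA (@mulWW _ _ hV) (@mulWW _ _ hU).
  by rewrite -(mulmxA V P B) -(mulmxA V (P *m B) P) P2.
- rewrite !mulmxA (@mulWW _ _ hV) -(mulmxA U B P) trmx_mul trmx_mul P3 hUT.
  by rewrite !mulmxA.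
- rewrite !mulmxA (@mulWW _ _ hU) -(mulmxA V P B) trmx_mul trmx_mul P4 hVT.
  by rewrite !mulmxA.
Qed.

Lemma weight1 k : is_weight (1%:M : 'M[R]_k).
Proof. by split; [rewrite trmx1 | rewrite mulmx1]. Qed.

Section A.
Variables (m n : nat) (A : 'M[R]_(m,n)) (P : 'M[R]_(n,m)).
Hypothesis hP : mp A P.

Lemma F1r : A *m (P *m P^T) = P^T.
Proof. by case: hP => P1 P2 P3 P4; rewrite mulmxA -P3 -trmx_mul mulmxA P2. Qed.
Lemma P1r : A *m (P *m A) = A.
Proof. by case: hP => P1 P2 P3 P4; rewrite mulmxA P1. Qed.
Lemma c1 k (Y : 'M[R]_(n,k)) : A *m (P *m (P^T *m Y)) = P^T *m Y.
Proof. by rewrite (mulmxA P) mulmxA F1r. Qed.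
Lemma c3 k (Y : 'M[R]_(n,k)) : A *m (P *m (A *m Y)) = A *m Y.
Proof. by rewrite (mulmxA P) mulmxA P1r. Qed.
Lemma c4 k (Y : 'M[R]_(m,k)) : P^T *m (A^T *m Y) = A *m (P *m Y).
Proof. by case: hP => P1 P2 P3 P4; rewrite mulmxA -trmx_mul P3 -mulmxA. Qed.

Lemma mp_gram : mp (A^T *m A) (P *m P^T).
Proof.
have P4 : (P *m A)^T = P *m A by case: hP.
split.
- by rewrite -!mulmxA c1 c4 P1r.
- by rewrite -!mulmxA c4 c3 F1r.
- have e : A^T *m A *m (P *m P^T) = P *m A.
    by rewrite -mulmxA F1r -trmx_mul P4.
  by rewrite e P4.
- have e : P *m P^T *m (A^T *m A) = P *m A.
    by rewrite -!mulmxA c4 P1r.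
  by rewrite e P4.
Qed.
End A.

Theorem lemma3p11 (m n : nat) (M : 'M[R]_m) (N : 'M[R]_n) (A : 'M[R]_(m, n))
  (hM : is_weight M) (hN : is_weight N) (hMA : M *m A = A *m N)
  (K : vset n) (hKcone : is_cone K) (hKclosed : is_closed_set K) :
  subset_v
    (iimage N (iprod N (iadj N M (imp_inv M N A)) (1%:M : 'M[R]_n)) (idual N K))
    (msum (iimage N (iprod N A (1%:M : 'M[R]_n)) K)
          (inull M (iadj M N (iprod N A (1%:M : 'M[R]_n)))))
  <->
  subset_v
    (iimage N (imp_inv N N (iprod M (iadj M N A) A)) (idual N K))
    (msum K (inull N (iprod N A (1%:M : 'M[R]_n)))).
Proof.
have [hMT hMM] := hM; have [hNT hNN] := hN.
have [P hP] := @mp_exists _ _ A.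
have hA : M *m A *m N = A by rewrite hMA (@mulWW _ _ hN).
have hNP : N *m P *m M = P.
  have h := @orth_mp _ _ _ _ _ _ hM hN hP; rewrite hA in h; exact: (@mp_uniq _ _ _ _ _ h hP).
have hX : imp_inv M N A = N *m P *m M := @imp_invE _ _ _ _ hM hN _ _ hP.
have hB0 : iprod M (iadj M N A) A = N *m (A^T *m A) *m 1%:M.
  by rewrite /iprod /iadj mulmx1 (@mulWW _ _ hM) mulmxA.
have hQ := @orth_mp _ _ _ _ _ _ hN (weight1 n) (@mp_gram _ _ _ _ hP).
have hY := @imp_invE _ _ _ _ hN hN _ _ hQ.
rewrite hB0 hY hX.
have eL s : iprod N (iprod N (iadj N M (N *m P *m M)) 1%:M) s = P^T *m s.
  rewrite /iprod /iadj mulmx1 !trmx_mul hMT hNT !mulmxA (@mulWW _ _ hN).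
  by rewrite hMM mul1mx (@mulWW _ _ hN).
have eA k : iprod N (iprod N A 1%:M) k = A *m k.
  by rewrite /iprod mulmx1 (@mulWW _ _ hN).
have eNT x : iprod M (iadj M N (iprod N A 1%:M)) x = A^T *m x.
  rewrite /iprod /iadj mulmx1 trmx_mul hNT !mulmxA hNN mul1mx.
  by rewrite (@mulWW _ _ hM).
have eR s : iprod N (N *m (1%:M *m (P *m P^T) *m N) *m N) s = P *m P^T *m s.
  rewrite /iprod mul1mx !mulmxA !(@mulWW _ _ hN).
  have hNP' : N *m P = P *m M by rewrite -{2}hNP (@mulWW _ _ hM).
  have e : N *m P *m P^T *m N = (N *m P) *m (N *m P)^T.
    by rewrite trmx_mul hNT mulmxA.
  by rewrite e hNP' trmx_mul hMT mulmxA (@mulWW _ _ hM).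
have F2 : P *m P^T *m A^T = P.
  have := congr1 trmx (@F1r _ _ _ _ hP).
  by rewrite !trmx_mul !trmxK.
have P1 : A *m P *m A = A by case: hP.
split => H x [s [hs ->]].
- have [a [b [[k [hk ea]] [hb e]]]] := H _ (ex_intro _ s (conj hs erefl)).
  rewrite eL ea eA in e; rewrite /inull eNT in hb.
  have hPb : P *m b = 0 by rewrite -F2 -mulmxA hb mulmx0.
  have hPs : P *m P^T *m s = P *m A *m k.
    by rewrite -mulmxA e mulmxDr hPb addr0 mulmxA.
  rewrite eR; exists k, (P *m P^T *m s - k); split; first exact: hk.
  split; last by rewrite addrC subrK.
  by rewrite /inull eA hPs mulmxBr !mulmxA P1 subrr.
- have [a [b [ha [hb e]]]] := H _ (ex_intro _ s (conj hs erefl)).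
  rewrite eR in e; rewrite /inull eA in hb.
  rewrite eL; exists (A *m a), 0; split.
    by exists a; split; last by rewrite eA.
  split; first by rewrite /inull eNT mulmx0.
  by rewrite addr0 -(@F1r _ _ _ _ hP) -mulmxA e mulmxDr hb addr0.
Qed.
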